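(* The map $\Phi:\mathcal B\to\widehat{\mathbb C}\setminus\overline\Delta$, $\Phi(B_{p,q})=c$ (the critical point of $B_{p,q}$ outside $\overline\Delta$), is a homeomorphism from $\mathcal B$ onto $U$.
   Context: $\Delta$ is the unit disk. For $|p|>1$, $|q|<1$, $B_{p,q}(z)=z\,\frac{z-p}{1-\bar pz}\,\frac{z-q}{1-\bar qz}$. $\mathcal B$ is the set of such $B_{p,q}$ (with $|p|>1$, $|q|<1$) which have a double critical point at $1$ and whose other two critical points are $c$ and $1/\bar c$ with $c\in\widehat{\mathbb C}\setminus\overline\Delta$ (for $c=\infty$ this is $B_{3,0}$). Let $\gamma=\{re^{it}: r+r^{-1}+4\cos t=0,\ r>1\}$, a curve separating $\widehat{\mathbb C}\setminus\overline\Delta$ into two components; $U$ is the component containing $2$ and $\infty$. *)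

(* Defs.v *)
From Stdlib Require Import Reals List.
Import ListNotations.
Open Scope R_scope.

Definition Cx : Type := (R * R)%type.
Definition C0 : Cx := (0, 0).
Definition C1 : Cx := (1, 0).
Definition Cof (r : R) : Cx := (r, 0).
Definition Cadd (z w : Cx) : Cx := (fst z + fst w, snd z + snd w).
Definition Copp (z : Cx) : Cx := (- fst z, - snd z).
Definition Csub (z w : Cx) : Cx := Cadd z (Copp w).
Definition Cmul (z w : Cx) : Cx :=
  (fst z * fst w - snd z * snd w, fst z * snd w + snd z * fst w).
Definition Cconj (z : Cx) : Cx := (fst z, - snd z).
Definition Cnorm2 (z : Cx) : R := fst z * fst z + snd z * snd z.
Definition Cnorm (z : Cx) : R := sqrt (Cnorm2 z).
Definition Cinv (z : Cx) : Cx := (fst z / Cnorm2 z, - snd z / Cnorm2 z).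

(** Riemann sphere: [None] is the point at infinity. *)
Definition sphere : Type := option Cx.

Definition chordal (a b : sphere) : R :=
  match a, b with
  | Some z, Some w =>
      2 * Cnorm (Csub z w) / (sqrt (1 + Cnorm2 z) * sqrt (1 + Cnorm2 w))
  | Some z, None | None, Some z => 2 / sqrt (1 + Cnorm2 z)
  | None, None => 0
  end.

(** B_{p,q}(z) = N(z)/D(z) with
    N(z) = z (z - p) (z - q),  D(z) = (1 - conj p z)(1 - conj q z). *)
Definition Bnum (p q z : Cx) : Cx := Cmul z (Cmul (Csub z p) (Csub z q)).
Definition Bden (p q z : Cx) : Cx :=
  Cmul (Csub C1 (Cmul (Cconj p) z)) (Csub C1 (Cmul (Cconj q) z)).
Definition Bnum' (p q z : Cx) : Cx :=
  Cadd (Cmul (Csub z p) (Csub z q))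
       (Cadd (Cmul z (Csub z q)) (Cmul z (Csub z p))).
Definition Bden' (p q z : Cx) : Cx :=
  Cadd (Copp (Cmul (Cconj p) (Csub C1 (Cmul (Cconj q) z))))
       (Copp (Cmul (Cconj q) (Csub C1 (Cmul (Cconj p) z)))).

(** Wronskian W = N' D - N D' (so B' = W / D^2 away from poles);
    its roots (with multiplicity) are the finite critical points of
    B_{p,q}, and infinity is critical with multiplicity 2*3-2 - deg W. *)
Definition Bwron (p q z : Cx) : Cx :=
  Csub (Cmul (Bnum' p q z) (Bden p q z)) (Cmul (Bnum p q z) (Bden' p q z)).

Definition lin_factor (z : Cx) (a : sphere) : Cx :=
  match a with Some a => Csub z a | None => C1 end.

(** [crit_divisor p q l]: the list [l] (length 4 = 2 deg - 2) is the list of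
    critical points of B_{p,q}, counted with multiplicity, infinity being
    [None]: W = k * prod_{finite a in l} (z - a) with k <> 0, and the number
    of [None] entries is 4 - deg W. *)
Definition crit_divisor (p q : Cx) (l : list sphere) : Prop :=
  length l = 4%nat /\
  exists k : Cx, k <> C0 /\
    forall z : Cx, Bwron p q z = Cmul k (fold_right (fun a acc => Cmul (lin_factor z a) acc) C1 l).

Definition reflect (c : sphere) : sphere :=
  match c with Some c => Some (Cinv (Cconj c)) | None => Some C0 end.

Definition outside_disk (c : sphere) : Prop :=
  match c with Some z => Cnorm z > 1 | None => True end.

Definition is_Phi (p q : Cx) (c : sphere) : Prop :=
  outside_disk c /\ crit_divisor p q [Some C1; Some C1; c; reflect c].

Definition inB (p q : Cx) : Prop :=
  Cnorm p > 1 /\ Cnorm q < 1 /\ exists c : sphere, is_Phi p q c.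

Definition pdist (p q p' q' : Cx) : R :=
  Rmax (Cnorm (Csub p p')) (Cnorm (Csub q q')).

Definition gamma (z : Cx) : Prop :=
  exists r t : R, r > 1 /\ r + / r + 4 * cos t = 0 /\ z = (r * cos t, r * sin t).

Definition Xset (w : sphere) : Prop :=
  match w with Some z => Cnorm z > 1 /\ ~ gamma z | None => True end.

Definition rel_open (S A : sphere -> Prop) : Prop :=
  forall x, S x -> A x -> exists d, d > 0 /\
    forall y, S y -> chordal x y < d -> A y.
Definition connected (S : sphere -> Prop) : Prop :=
  forall A : sphere -> Prop,
    rel_open S A -> rel_open S (fun x => ~ A x) ->
    forall x y, S x -> S y -> A x -> A y.

(** U = connected component of X containing 2 (it also contains infinity). *)
Definition Uset (w : sphere) : Prop :=
  exists S : sphere -> Prop,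
    (forall x, S x -> Xset x) /\ connected S /\ S (Some (Cof 2)) /\ S w.

(* Main.v *)
Require Import Defs.
From Stdlib Require Import Reals List.
Import ListNotations.
Open Scope R_scope.
From Stdlib Require Import Lra Psatz Classical.
Local Notation C1 := Defs.C1.

Ltac cxA := cbv [Bwron Bnum Bden Bnum' Bden' Cof Cadd Csub Copp Cmul Cconj Cnorm2 Defs.C1 C0 Cinv fst snd] in *.

Lemma Cnorm2_nonneg : forall z, 0 <= Cnorm2 z.
Proof. intros [a b]; cxA; nra. Qed.
Lemma Cnorm_nonneg : forall z, 0 <= Cnorm z.
Proof. intros; apply sqrt_pos. Qed.
Lemma Cnorm_sq : forall z, Cnorm z * Cnorm z = Cnorm2 z.
Proof. intros; unfold Cnorm; apply sqrt_sqrt, Cnorm2_nonneg. Qed.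
Lemma Cnorm_gt1 : forall z, Cnorm z > 1 <-> Cnorm2 z > 1.
Proof. intros z; pose proof (Cnorm_sq z); pose proof (Cnorm_nonneg z); split; intros; nra. Qed.
Lemma Cnorm_lt1 : forall z, Cnorm z < 1 <-> Cnorm2 z < 1.
Proof. intros z; pose proof (Cnorm_sq z); pose proof (Cnorm_nonneg z); split; intros; nra. Qed.
Lemma Cnorm2_mul : forall a b, Cnorm2 (Cmul a b) = Cnorm2 a * Cnorm2 b.
Proof. intros [a1 a2] [b1 b2]; cxA; ring. Qed.
Lemma Cnorm_mul : forall a b, Cnorm (Cmul a b) = Cnorm a * Cnorm b.
Proof. intros; unfold Cnorm; rewrite Cnorm2_mul; apply sqrt_mult_alt, Cnorm2_nonneg. Qed.
Lemma Cnorm2_zero : forall z, Cnorm2 z = 0 -> z = C0.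
Proof. intros [a b]; cxA; intros; f_equal; nra. Qed.
Lemma Cnorm_zero : forall z, Cnorm z = 0 -> z = C0.
Proof. intros z H; apply Cnorm2_zero; rewrite <- Cnorm_sq, H; ring. Qed.
Lemma Cmul_eq0 : forall a b, Cmul a b = C0 -> a = C0 \/ b = C0.
Proof. intros a b H. assert (Cnorm2 a * Cnorm2 b = 0) by (rewrite <- Cnorm2_mul, H; cxA; ring).
  destruct (Rmult_integral _ _ H0); [left|right]; apply Cnorm2_zero; auto. Qed.
Lemma Cnorm_fst : forall z, Rabs (fst z) <= Cnorm z.
Proof. intros [a b]; unfold Cnorm; cxA. rewrite <- sqrt_Rsqr_abs. apply sqrt_le_1_alt. unfold Rsqr; nra. Qed.
Lemma Cnorm_snd : forall z, Rabs (snd z) <= Cnorm z.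
Proof. intros [a b]; unfold Cnorm; cxA. rewrite <- sqrt_Rsqr_abs. apply sqrt_le_1_alt. unfold Rsqr; nra. Qed.
Lemma Cnorm_le_sum : forall z, Cnorm z <= Rabs (fst z) + Rabs (snd z).
Proof. intros [a b]; unfold Cnorm; cxA.
  rewrite <- (sqrt_square (Rabs a + Rabs b)) by (pose proof (Rabs_pos a); pose proof (Rabs_pos b); lra).
  apply sqrt_le_1_alt. pose proof (Rabs_pos a); pose proof (Rabs_pos b).
  assert (a*a = Rabs a * Rabs a) by (rewrite <- Rabs_mult, Rabs_right; nra).
  assert (b*b = Rabs b * Rabs b) by (rewrite <- Rabs_mult, Rabs_right; nra). nra. Qed.
Lemma Cnorm_triang : forall a b, Cnorm (Cadd a b) <= Cnorm a + Cnorm b.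
Proof. intros a b. pose proof (Cnorm_sq a); pose proof (Cnorm_sq b); pose proof (Cnorm_sq (Cadd a b)).
  pose proof (Cnorm_nonneg a); pose proof (Cnorm_nonneg b); pose proof (Cnorm_nonneg (Cadd a b)).
  assert (CS : (fst a * fst b + snd a * snd b) <= Cnorm a * Cnorm b).
  { assert ((fst a * fst b + snd a * snd b)^2 <= (Cnorm a * Cnorm b)^2).
    { replace ((Cnorm a * Cnorm b)^2) with (Cnorm2 a * Cnorm2 b) by (rewrite <- H, <- H0; ring).
      destruct a as [a1 a2], b as [b1 b2]; cxA. pose proof (Rle_0_sqr (a1*b2 - a2*b1)); unfold Rsqr in *; nra. }
    assert (0 <= Cnorm a * Cnorm b) by (apply Rmult_le_pos; auto). nra. }
  assert (Cnorm2 (Cadd a b) = Cnorm2 a + Cnorm2 b + 2 * (fst a * fst b + snd a * snd b))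
   by (destruct a, b; cxA; ring).
  nra. Qed.
Lemma Cnorm_opp : forall a, Cnorm (Copp a) = Cnorm a.
Proof. intros [a b]; unfold Cnorm; cxA; f_equal; ring. Qed.
Lemma Cnorm_conj : forall a, Cnorm (Cconj a) = Cnorm a.
Proof. intros [a b]; unfold Cnorm; cxA; f_equal; ring. Qed.
Lemma Cnorm_sub_sym : forall a b, Cnorm (Csub a b) = Cnorm (Csub b a).
Proof. intros [a1 a2] [b1 b2]; unfold Cnorm; cxA; f_equal; ring. Qed.
Lemma Cnorm_sub_triang : forall a b, Cnorm (Csub a b) <= Cnorm a + Cnorm b.
Proof. intros; unfold Csub; rewrite <- (Cnorm_opp b); apply Cnorm_triang. Qed.
Lemma Cnorm_rev_triang : forall a b, Cnorm a - Cnorm b <= Cnorm (Csub a b).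
Proof. intros a b. assert (a = Cadd (Csub a b) b) by (destruct a, b; cxA; f_equal; ring).
  pose proof (Cnorm_triang (Csub a b) b). rewrite <- H in H0. lra. Qed.
Lemma Cnorm_C0 : Cnorm C0 = 0.
Proof. unfold Cnorm; cxA. replace (0*0+0*0) with 0 by ring. apply sqrt_0. Qed.

Ltac cxB := cbv [Bwron Bnum Bden Bnum' Bden' Cof Cadd Csub Copp Cmul Cconj Cnorm2 Defs.C1 C0 Cinv fst snd] in *.

Definition wof (c : sphere) : Cx := match c with Some z => Cinv (Cconj z) | None => C0 end.
Definition unrefl (v : Cx) : sphere :=
  if Req_EM_T (Cnorm2 v) 0 then None else Some (Cinv (Cconj v)).
Definition chordalC (u v : Cx) : R :=
  2 * Cnorm (Csub u v) / (sqrt (1 + Cnorm2 u) * sqrt (1 + Cnorm2 v)).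

Lemma Cinv_conj_eq : forall z, Cinv (Cconj z) = (fst z / Cnorm2 z, snd z / Cnorm2 z).
Proof. intros [a b]; cxB. f_equal. replace (a*a + - b * - b) with (a*a+b*b) by ring; auto.
  replace (a*a + - b * - b) with (a*a+b*b) by ring. unfold Rdiv; ring. Qed.
Lemma Cnorm2_inv : forall z, Cnorm2 z <> 0 -> Cnorm2 (Cinv (Cconj z)) = / Cnorm2 z.
Proof. intros z H; rewrite Cinv_conj_eq. destruct z as [a b]; cxB. field. auto. Qed.
Lemma Cinv_conj_invol : forall z, Cnorm2 z <> 0 -> Cinv (Cconj (Cinv (Cconj z))) = z.
Proof. intros z H. rewrite (Cinv_conj_eq (Cinv (Cconj z))), Cnorm2_inv by auto.
  rewrite Cinv_conj_eq. destruct z as [a b]; cxB. f_equal; field; auto. Qed.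

Lemma reflect_wof : forall c, reflect c = Some (wof c).
Proof. intros [z|]; reflexivity. Qed.

Lemma wof_lt1 : forall c, outside_disk c -> Cnorm2 (wof c) < 1.
Proof. intros [z|] H; simpl in *.
  - apply Cnorm_gt1 in H. rewrite Cnorm2_inv by lra.
    apply (Rmult_lt_reg_l (Cnorm2 z)); [lra|]. rewrite Rinv_r; lra.
  - cxB; lra. Qed.

Lemma unrefl_wof : forall c, outside_disk c -> unrefl (wof c) = c.
Proof. intros [z|] H; simpl in *; unfold unrefl.
  - apply Cnorm_gt1 in H. rewrite Cnorm2_inv by lra.
    destruct (Req_EM_T (/ Cnorm2 z) 0) as [e|e].
    + exfalso. apply (Rinv_neq_0_compat (Cnorm2 z)); lra.
    + rewrite Cinv_conj_invol by lra. auto.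
  - destruct (Req_EM_T (Cnorm2 C0) 0) as [e|e]; auto. exfalso; apply e; cxB; ring. Qed.

Lemma wof_unrefl : forall v, wof (unrefl v) = v.
Proof. intros v; unfold unrefl. destruct (Req_EM_T (Cnorm2 v) 0) as [e|e]; simpl.
  - symmetry; apply Cnorm2_zero; auto.
  - apply Cinv_conj_invol; auto. Qed.

Lemma outside_unrefl : forall v, Cnorm2 v < 1 -> outside_disk (unrefl v).
Proof. intros v H; unfold unrefl. destruct (Req_EM_T (Cnorm2 v) 0) as [e|e]; simpl; auto.
  apply Cnorm_gt1. rewrite Cnorm2_inv by auto. pose proof (Cnorm2_nonneg v).
  apply (Rmult_lt_reg_l (Cnorm2 v)); [lra|]. rewrite Rinv_r; lra. Qed.

Lemma sqrt_ratio : forall A B C, 0 <= A -> 0 < B -> 0 < C ->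
  sqrt A / (sqrt B * sqrt C) = sqrt (A / (B * C)).
Proof. intros. rewrite sqrt_div_alt by nra. rewrite sqrt_mult_alt by lra. auto. Qed.

Lemma chordalC_eq : forall u v, chordalC u v = 2 * sqrt (Cnorm2 (Csub u v) / ((1 + Cnorm2 u) * (1 + Cnorm2 v))).
Proof. intros; unfold chordalC, Cnorm. pose proof (Cnorm2_nonneg u); pose proof (Cnorm2_nonneg v).
  rewrite <- sqrt_ratio by (try apply Cnorm2_nonneg; lra). unfold Rdiv; ring. Qed.

Lemma chordal_unrefl : forall u v, chordal (unrefl u) (unrefl v) = chordalC u v.
Proof. intros u v. rewrite chordalC_eq. unfold unrefl.
  pose proof (Cnorm2_nonneg u) as Hu; pose proof (Cnorm2_nonneg v) as Hv.
  destruct (Req_EM_T (Cnorm2 u) 0) as [eu|eu]; destruct (Req_EM_T (Cnorm2 v) 0) as [ev|ev]; simpl.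
  - apply Cnorm2_zero in eu, ev; subst. cxB. replace ((0 + - 0) * (0 + - 0) + (0 + - 0) * (0 + - 0)) with 0 by ring.
    unfold Rdiv; rewrite Rmult_0_l, sqrt_0; ring.
  - apply Cnorm2_zero in eu; subst. rewrite Cnorm2_inv by auto.
    replace (2 / sqrt (1 + / Cnorm2 v)) with (2 * (sqrt 1 / (sqrt (1 + / Cnorm2 v) * sqrt 1))).
    2:{ rewrite sqrt_1. field. apply Rgt_not_eq, sqrt_lt_R0. pose proof (Rinv_0_lt_compat (Cnorm2 v)); lra. }
    rewrite sqrt_ratio by (try pose proof (Rinv_0_lt_compat (Cnorm2 v)); lra). f_equal. f_equal.
    destruct v as [a b]; cxB. field. split; [|auto]. intro. nra.
  - apply Cnorm2_zero in ev; subst. rewrite Cnorm2_inv by auto.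
    replace (2 / sqrt (1 + / Cnorm2 u)) with (2 * (sqrt 1 / (sqrt (1 + / Cnorm2 u) * sqrt 1))).
    2:{ rewrite sqrt_1. field. apply Rgt_not_eq, sqrt_lt_R0. pose proof (Rinv_0_lt_compat (Cnorm2 u)); lra. }
    rewrite sqrt_ratio by (try pose proof (Rinv_0_lt_compat (Cnorm2 u)); lra). f_equal. f_equal.
    destruct u as [a b]; cxB. field. split; [|auto]. intro. nra.
  - unfold Cnorm. rewrite !Cnorm2_inv by auto.
    replace (2 * sqrt (Cnorm2 (Csub (Cinv (Cconj u)) (Cinv (Cconj v)))) / (sqrt (1 + / Cnorm2 u) * sqrt (1 + / Cnorm2 v)))
      with (2 * (sqrt (Cnorm2 (Csub (Cinv (Cconj u)) (Cinv (Cconj v)))) / (sqrt (1 + / Cnorm2 u) * sqrt (1 + / Cnorm2 v)))) by (unfold Rdiv; ring).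
    pose proof (Rinv_0_lt_compat (Cnorm2 u)); pose proof (Rinv_0_lt_compat (Cnorm2 v)).
    rewrite sqrt_ratio by (try apply Cnorm2_nonneg; lra). f_equal. f_equal.
    rewrite !Cinv_conj_eq. destruct u as [a b], v as [c d]; cxB. field.
    repeat split; auto; intro; nra. Qed.

Definition Dl (w:Cx) := 1 + Cnorm2 w + 4 * fst w.
Definition sOf (w:Cx) : Cx := (3*(2*fst w + (1+Cnorm2 w))/Dl w, 6 * snd w / Dl w).
Definition mOf (w:Cx) : Cx := (6*fst w/Dl w, 6*snd w/Dl w).
Definition Pw (w z : Cx) : Cx := Cmul (Csub z C1) (Cmul (Csub z C1) (Cmul (Csub (Cmul (Cconj w) z) C1) (Csub z w))).
Definition Wpoly (s m z : Cx) : Cx :=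
  let z2 := Cmul z z in let z3 := Cmul z2 z in let z4 := Cmul z3 z in
  Cadd (Cmul (Cconj m) z4) (Cadd (Cmul (Cof (-2)) (Cmul (Cconj s) z3))
   (Cadd (Cmul (Cof (3 + Cnorm2 s - Cnorm2 m)) z2) (Cadd (Cmul (Cof (-2)) (Cmul s z)) m))).
Ltac cxC := cbv [Bwron Wpoly Bnum Bden Bnum' Bden' Cof Cadd Csub Copp Cmul Cconj Cnorm2 Defs.C1 C0 Cinv Dl sOf mOf Pw fst snd] in *.
Lemma W_expand : forall p q z, Bwron p q z = Wpoly (Cadd p q) (Cmul p q) z.
Proof. intros [p1 p2] [q1 q2] [z1 z2]. cxC. f_equal; ring. Qed.
Lemma Wpoly_w : forall w z, Dl w <> 0 -> Wpoly (sOf w) (mOf w) z = Cmul (6 / Dl w, 0) (Pw w z).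
Proof. intros [x y] [z1 z2] H. cxC. f_equal; field; auto. Qed.

Definition prodl (z : Cx) (l : list sphere) : Cx :=
  fold_right (fun a acc => Cmul (lin_factor z a) acc) C1 l.

Lemma prod_some : forall z0 k z, Cnorm2 z0 <> 0 ->
  Cmul k (prodl z [Some C1; Some C1; Some z0; Some (Cinv (Cconj z0))]) = Cmul (Cmul k z0) (Pw (Cinv (Cconj z0)) z).
Proof. intros [a b] [k1 k2] [z1 z2] H. unfold prodl; simpl. cxC. f_equal; field; try split; auto; intro HH; apply H; nra. Qed.

Lemma prod_none : forall k z,
  Cmul k (prodl z [Some C1; Some C1; None; Some C0]) = Cmul (Copp k) (Pw C0 z).
Proof. intros [k1 k2] [z1 z2]. unfold prodl; simpl. cxC. f_equal; ring. Qed.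

Lemma poly5_zero : forall a0 a1 a2 a3 a4 : R,
  (forall t, a0 + a1*t + a2*(t*t) + a3*(t*t*t) + a4*(t*t*t*t) = 0) ->
  a0 = 0 /\ a1 = 0 /\ a2 = 0 /\ a3 = 0 /\ a4 = 0.
Proof. intros. pose proof (H 0); pose proof (H 1); pose proof (H (-1)); pose proof (H 2); pose proof (H (-2)).
  lra. Qed.

Lemma coeffs : forall s1 s2 m1 m2 k1 k2 x y,
  (forall t, Wpoly (s1,s2) (m1,m2) (t,0) = Cmul (k1,k2) (Pw (x,y) (t,0))) ->
  let N := 1 + (x*x+y*y) in
  k2 = 0 /\ m1 = k1 * x /\ m2 = k1 * y /\ 2 * s1 = k1 * (2*x+N) /\ s2 = k1 * y /\
  3 + (s1*s1+s2*s2) - (m1*m1+m2*m2) = 2 * k1 * (x + N).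
Proof. intros s1 s2 m1 m2 k1 k2 x y H N.
  assert (R1 : forall t, (m1 - (k1*x - k2*y)) + (-2*s1 + (k1*(2*x+N) - 2*k2*y))*t
     + ((3 + (s1*s1+s2*s2) - (m1*m1+m2*m2)) - k1*(2*x+2*N))*(t*t)
     + (-2*s1 + (k1*(N+2*x) + 2*k2*y))*(t*t*t) + (m1 - (k1*x+k2*y))*(t*t*t*t) = 0).
  { intro t. pose proof (f_equal fst (H t)) as E. unfold N. cxC. lra. }
  assert (R2 : forall t, (m2 - (k1*y + k2*x)) + (-2*s2 + (k2*(2*x+N) + 2*k1*y))*t
     + (0 - k2*(2*x+2*N))*(t*t)
     + (2*s2 + (k2*(N+2*x) - 2*k1*y))*(t*t*t) + (-m2 - (k2*x-k1*y))*(t*t*t*t) = 0).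
  { intro t. pose proof (f_equal snd (H t)) as E. unfold N. cxC. lra. }
  apply poly5_zero in R1, R2.
  assert (k2 = 0).
  { destruct R2 as [_ [_ [E _]]]. assert (2*x+2*N > 0) by (unfold N; nra). nra. }
  subst k2. lra. Qed.

Lemma crit_to_K : forall p q c, outside_disk c ->
  crit_divisor p q [Some C1; Some C1; c; reflect c] ->
  exists K, K <> C0 /\ forall z, Bwron p q z = Cmul K (Pw (wof c) z).
Proof. intros p q c Ho [_ [k [Hk HW]]]. destruct c as [z0|]; simpl in *.
  - apply Cnorm_gt1 in Ho. exists (Cmul k z0). split.
    + intro E. destruct (Cmul_eq0 _ _ E) as [E1|E1]; auto. subst; cxC; lra.
    + intro z. rewrite HW. change (fold_right _ _ _) with (prodl z [Some C1; Some C1; Some z0; Some (Cinv (Cconj z0))]).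
      apply prod_some. lra.
  - exists (Copp k). split.
    + intro E; apply Hk. destruct k as [a b]; cxC. injection E; intros; f_equal; lra.
    + intro z. rewrite HW. change (fold_right _ _ _) with (prodl z [Some C1; Some C1; None; Some C0]).
      apply prod_none. Qed.

Lemma K1 : forall p q c, Cnorm2 p > 1 -> Cnorm2 q < 1 -> is_Phi p q c ->
  Cnorm2 (wof c) < 1 /\ Dl (wof c) <> 0 /\ Cadd p q = sOf (wof c) /\ Cmul p q = mOf (wof c).
Proof. intros p q c Hp Hq [Ho Hcd].
  destruct (crit_to_K p q c Ho Hcd) as [K [HK HW]].
  pose proof (wof_lt1 c Ho) as Hw. split; auto.
  remember (wof c) as w eqn:Ew. clear Ew Hcd.
  destruct w as [x y], K as [k1 k2], p as [p1 p2], q as [q1 q2].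
  assert (HW' : forall t, Wpoly (p1+q1, p2+q2) (p1*q1 - p2*q2, p1*q2+p2*q1) (t,0) = Cmul (k1,k2) (Pw (x,y) (t,0))).
  { intro t. rewrite <- HW, W_expand. reflexivity. }
  destruct (coeffs _ _ _ _ _ _ _ _ HW') as [E0 [E1 [E2 [E3 [E4 E5]]]]].
  set (N := 1 + (x*x+y*y)) in *. subst k2.
  assert (Q : (Dl (x,y) * k1 - 6) * (N * k1 - 2) = 0).
  { unfold Dl, Cnorm2, N in *; simpl in *. rewrite E1, E2, E4 in E5.
    replace (p1+q1) with (k1 * (2*x + (1 + (x*x+y*y)))/2) in E5 by lra. nra. }
  destruct (Rmult_integral _ _ Q) as [Q1|Q1].
  - assert (HD : Dl (x,y) <> 0) by (intro D; rewrite D in Q1; lra).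
    assert (Hk : k1 = 6 / Dl (x,y)) by (replace 6 with (Dl (x,y) * k1) by lra; field; auto).
    split; auto. unfold sOf, mOf, Cadd, Cmul, Cnorm2; simpl. fold N. rewrite Hk in *.
    unfold Cnorm2 in *; simpl in *. fold N in HD.
    split; f_equal; try lra.
  - exfalso. cbv [Cnorm2 fst snd] in Hp, Hq.
    assert (Z : Cmul (Csub C1 (p1,p2)) (Csub C1 (q1,q2)) = C0).
    { cxC. f_equal.
      - replace ((1 + - p1) * (1 + - q1) - (0 + - p2) * (0 + - q2)) with (1 - (p1+q1) + (p1*q1-p2*q2)) by ring.
        nra.
      - replace ((1 + - p1) * (0 + - q2) + (0 + - p2) * (1 + - q1)) with (-(p2+q2) + (p1*q2+p2*q1)) by ring.
        lra. }
    destruct (Cmul_eq0 _ _ Z) as [Z1|Z1]; cxC; injection Z1; intros; nra. Qed.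

Definition Gq (s1 s2 m1 m2 : R) : R :=
  let a := s1*s1 - s2*s2 - 4*m1 in let b := 2*s1*s2 - 4*m2 in
  (a*a+b*b) - (2 + 2*(m1*m1+m2*m2) - (s1*s1+s2*s2))^2.

Lemma Gq_pq : forall p1 p2 q1 q2,
  -4 * ((p1*p1+p2*p2 - 1)*(q1*q1+q2*q2-1)) * ((1+(p1*p1+p2*p2))*(1+(q1*q1+q2*q2)) - ((p1+q1)^2+(p2+q2)^2))
  = Gq (p1+q1) (p2+q2) (p1*q1-p2*q2) (p1*q2+p2*q1).
Proof. intros; unfold Gq; cbv beta zeta; ring. Qed.

Lemma Gq_w : forall x y, Dl (x,y) <> 0 ->
  Gq (fst (sOf (x,y))) (snd (sOf (x,y))) (fst (mOf (x,y))) (snd (mOf (x,y))) * (Dl (x,y))^4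
  = 32 * Dl (x,y) * ((1-x)^2 + y^2)^3.
Proof. intros x y H. unfold Gq. cxC. cbv beta zeta. field. auto. Qed.

Lemma Fp_nonneg : forall p1 p2 q1 q2,
  0 <= (1+(p1*p1+p2*p2))*(1+(q1*q1+q2*q2)) - ((p1+q1)^2+(p2+q2)^2).
Proof. intros. set (u := p1*q1+p2*q2).
  assert (u*u <= (p1*p1+p2*p2)*(q1*q1+q2*q2)) by (unfold u; pose proof (Rle_0_sqr (p1*q2-p2*q1)); unfold Rsqr in *; nra).
  replace ((1+(p1*p1+p2*p2))*(1+(q1*q1+q2*q2)) - ((p1+q1)^2+(p2+q2)^2))
    with (1 + (p1*p1+p2*p2)*(q1*q1+q2*q2) - 2*u) by (unfold u; ring).
  pose proof (Rle_0_sqr (1-u)); unfold Rsqr in *; nra. Qed.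

Lemma K2 : forall p q w, Cnorm2 w < 1 -> Dl w <> 0 -> Cadd p q = sOf w -> Cmul p q = mOf w ->
  (Cnorm2 p - 1) * (Cnorm2 q - 1) * Dl w < 0.
Proof. intros [p1 p2] [q1 q2] [x y] Hw HD Hs Hm.
  pose proof (Gq_pq p1 p2 q1 q2) as G1. pose proof (Gq_w x y HD) as G2.
  unfold Cadd, Cmul in Hs, Hm; simpl in Hs, Hm. rewrite <- Hs, <- Hm in G2. cbv [fst snd] in G2.
  rewrite <- G1 in G2. pose proof (Fp_nonneg p1 p2 q1 q2) as F.
  cbv [Cnorm2 fst snd] in *.
  set (E := (p1*p1+p2*p2 - 1)*(q1*q1+q2*q2-1)) in *.
  set (Fq := (1+(p1*p1+p2*p2))*(1+(q1*q1+q2*q2)) - ((p1+q1)^2+(p2+q2)^2)) in *.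
  set (L := (1-x)^2+y^2) in *. set (D := Dl (x,y)) in *.
  assert (L > 0) by (unfold L; nra).
  assert (L^3 > 0) by (apply pow_lt; auto).
  assert (D*D > 0) by (apply Rsqr_pos_lt in HD; unfold Rsqr in HD; auto).
  assert (HX : (E*D) * (Fq * D^4) = -8 * (D*D) * L^3) by (replace (E*D*(Fq*D^4)) with ((-4*E*Fq*D^4)*D*/(-4)) by (field); rewrite G2; field).
  assert (0 <= Fq * D^4) by (apply Rmult_le_pos; auto; replace (D^4) with ((D*D)*(D*D)) by ring; nra).
  replace ((p1 * p1 + p2 * p2 - 1) * (q1 * q1 + q2 * q2 - 1) * D) with (E*D) by (unfold E; ring).
  nra. Qed.

Lemma K2a : forall p q w, Cnorm2 p > 1 -> Cnorm2 q < 1 -> Cnorm2 w < 1 -> Dl w <> 0 ->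
  Cadd p q = sOf w -> Cmul p q = mOf w -> Dl w > 0.
Proof. intros. pose proof (K2 p q w H1 H2 H3 H4).
  assert ((Cnorm2 p - 1) * (Cnorm2 q - 1) < 0) by (apply Rmult_pos_neg; lra).
  destruct (Rle_lt_dec (Dl w) 0); [|lra]. exfalso.
  revert H5 H6 r. generalize ((Cnorm2 p - 1) * (Cnorm2 q - 1)) (Dl w). intros. nra. Qed.

Lemma Csqrt_ex : forall z, exists d, Cmul d d = z.
Proof. intros [a b].
  set (r := sqrt (a*a+b*b)).
  assert (Hr : r*r = a*a+b*b) by (apply sqrt_sqrt; nra).
  assert (Hr0 : 0 <= r) by apply sqrt_pos.
  assert (Ha : Rabs a <= r) by (unfold r; rewrite <- sqrt_Rsqr_abs; apply sqrt_le_1_alt; unfold Rsqr; nra).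
  assert (Ha' : -r <= a <= r) by (pose proof (Rle_abs a); pose proof (Rle_abs (-a)); rewrite Rabs_Ropp in *; split; lra).
  set (d1 := sqrt ((r+a)/2)). set (d2 := sqrt ((r-a)/2)).
  assert (H1 : d1*d1 = (r+a)/2) by (apply sqrt_sqrt; lra).
  assert (H2 : d2*d2 = (r-a)/2) by (apply sqrt_sqrt; lra).
  assert (H12 : d1*d2 = Rabs b / 2).
  { unfold d1, d2. rewrite <- sqrt_mult_alt by lra.
    replace ((r+a)/2*((r-a)/2)) with ((b/2)*(b/2)) by (replace (r+a) with (r+a) by ring; field_simplify; nra).
    replace (Rabs b / 2) with (Rabs (b/2)) by (unfold Rdiv; rewrite Rabs_mult, (Rabs_right (/2)); lra).
    rewrite <- sqrt_Rsqr_abs. reflexivity. }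
  destruct (Rle_dec 0 b) as [Hb|Hb].
  - exists (d1, d2). cxC. rewrite Rabs_right in H12 by lra. f_equal; nra.
  - exists (d1, - d2). cxC. rewrite Rabs_left in H12 by lra. f_equal; nra. Qed.

Lemma K3 : forall w, Cnorm2 w < 1 -> Dl w > 0 ->
  exists p q, Cnorm2 p > 1 /\ Cnorm2 q < 1 /\ Cadd p q = sOf w /\ Cmul p q = mOf w.
Proof. intros w Hw HD.
  destruct (sOf w) as [s1 s2] eqn:Es. destruct (mOf w) as [m1 m2] eqn:Em.
  destruct (Csqrt_ex (s1*s1 - s2*s2 - 4*m1, 2*s1*s2 - 4*m2)) as [[d1 d2] Hd].
  cbv [Cmul fst snd] in Hd. injection Hd; intros Hd2 Hd1.
  set (p := ((s1+d1)/2, (s2+d2)/2)). set (q := ((s1-d1)/2, (s2-d2)/2)).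
  assert (Hs : Cadd p q = sOf w) by (rewrite Es; unfold p, q; cxC; f_equal; field).
  assert (Hm : Cmul p q = mOf w) by (rewrite Em; unfold p, q; cxC; f_equal; nra).
  pose proof (K2 p q w Hw ltac:(lra) Hs Hm) as K.
  assert (Hpq : (Cnorm2 p - 1) * (Cnorm2 q - 1) < 0).
  { revert K HD. generalize ((Cnorm2 p - 1) * (Cnorm2 q - 1)) (Dl w). intros. nra. }
  destruct (Rlt_dec 1 (Cnorm2 p)) as [H1|H1].
  - exists p, q. assert (Cnorm2 q < 1).
    { revert Hpq H1. generalize (Cnorm2 p) (Cnorm2 q). intros. nra. }
    repeat split; auto; congruence.
  - assert (Cnorm2 p < 1 /\ Cnorm2 q > 1).
    { assert (Cnorm2 p <> 1) by (intro E; rewrite E in Hpq; lra).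
      revert Hpq H1 H. generalize (Cnorm2 p) (Cnorm2 q). intros. split; nra. }
    exists q, p. repeat split; try tauto.
    + rewrite <- Es, <- Hs. unfold p, q; cxC; f_equal; ring.
    + rewrite <- Em, <- Hm. unfold p, q; cxC; f_equal; ring. Qed.

Lemma Copp_Copp : forall a, Copp (Copp a) = a.
Proof. intros [a b]; cxC; f_equal; ring. Qed.

Lemma K3phi : forall p q w, Cnorm2 w < 1 -> Dl w <> 0 -> Cadd p q = sOf w -> Cmul p q = mOf w ->
  is_Phi p q (unrefl w).
Proof. intros p q w Hw HD Hs Hm. split; [apply outside_unrefl; auto|].
  rewrite reflect_wof, wof_unrefl. split; [reflexivity|].
  assert (HK : forall z, Bwron p q z = Cmul (6 / Dl w, 0) (Pw w z))
    by (intro z; rewrite W_expand, Hs, Hm; apply Wpoly_w; auto).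
  assert (HK0 : (6 / Dl w, 0) <> C0).
  { intro E. injection E. intro E1. unfold Rdiv in E1. apply Rmult_integral in E1.
    destruct E1 as [E1|E1]; [lra|]. apply (Rinv_neq_0_compat (Dl w)); auto. }
  unfold unrefl. destruct (Req_EM_T (Cnorm2 w) 0) as [e|e].
  - apply Cnorm2_zero in e. subst w. exists (Copp (6 / Dl C0, 0)). split.
    + intro E. apply HK0. rewrite <- (Copp_Copp (6 / Dl C0, 0)), E. cxC; f_equal; ring.
    + intro z. rewrite HK. change (fold_right _ _ _) with (prodl z [Some C1; Some C1; None; Some C0]).
      rewrite prod_none, Copp_Copp. reflexivity.
  - set (z0 := Cinv (Cconj w)).
    assert (Hz0 : Cnorm2 z0 <> 0) by (unfold z0; rewrite Cnorm2_inv by auto; apply Rinv_neq_0_compat; auto).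
    exists (Cmul (6 / Dl w, 0) (Cconj w)). split.
    + intro E. destruct (Cmul_eq0 _ _ E) as [E1|E1]; auto. apply e. destruct w; cxC; injection E1; intros; nra.
    + intro z. rewrite HK. change (fold_right _ _ _) with (prodl z [Some C1; Some C1; Some z0; Some w]).
      replace (prodl z [Some C1; Some C1; Some z0; Some w]) with (prodl z [Some C1; Some C1; Some z0; Some (Cinv (Cconj z0))])
        by (unfold z0; rewrite Cinv_conj_invol; auto).
      rewrite prod_some by auto.
      unfold z0. rewrite (Cinv_conj_invol w) by auto. f_equal.
      rewrite Cinv_conj_eq. destruct w as [x y]. cxC. f_equal; field; auto. Qed.

Ltac cxD := cbv [Bwron Wpoly Bnum Bden Bnum' Bden' Cof Cadd Csub Copp Cmul Cconj Cnorm2 Defs.C1 C0 Cinv Dl sOf mOf Pw fst snd] in *.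

Lemma sqrt_ge1 : forall x, 0 <= x -> 1 <= sqrt (1 + x).
Proof. intros. rewrite <- sqrt_1 at 1. apply sqrt_le_1_alt. lra. Qed.

Lemma chordalC_le : forall u v, chordalC u v <= 2 * Cnorm (Csub u v).
Proof. intros. unfold chordalC. pose proof (sqrt_ge1 _ (Cnorm2_nonneg u)); pose proof (sqrt_ge1 _ (Cnorm2_nonneg v)).
  pose proof (Cnorm_nonneg (Csub u v)).
  assert (1 <= sqrt (1 + Cnorm2 u) * sqrt (1 + Cnorm2 v)) by nra.
  unfold Rdiv. apply (Rmult_le_reg_r (sqrt (1 + Cnorm2 u) * sqrt (1 + Cnorm2 v))); [lra|].
  rewrite Rmult_assoc, Rinv_l by lra. nra. Qed.

Lemma chordalC_ge : forall u v, Cnorm2 u <= 1 -> Cnorm2 v <= 1 -> Cnorm (Csub u v) <= chordalC u v.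
Proof. intros u v Hu Hv. unfold chordalC.
  pose proof (sqrt_ge1 _ (Cnorm2_nonneg u)); pose proof (sqrt_ge1 _ (Cnorm2_nonneg v)).
  pose proof (Cnorm_nonneg (Csub u v)).
  assert (sqrt (1 + Cnorm2 u) * sqrt (1 + Cnorm2 v) <= 2).
  { rewrite <- sqrt_mult_alt by (pose proof (Cnorm2_nonneg u); lra).
    rewrite <- (sqrt_square 2) by lra. apply sqrt_le_1_alt.
    pose proof (Cnorm2_nonneg u); pose proof (Cnorm2_nonneg v). nra. }
  assert (1 <= sqrt (1 + Cnorm2 u) * sqrt (1 + Cnorm2 v)) by nra.
  unfold Rdiv. apply (Rmult_le_reg_r (sqrt (1 + Cnorm2 u) * sqrt (1 + Cnorm2 v))); [lra|].
  rewrite Rmult_assoc, Rinv_l by lra. nra. Qed.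

Definition vw (w : Cx) : Cx := (2 * fst w / (1 + Cnorm2 w), 2 * snd w / (1 + Cnorm2 w)).

Lemma Cnorm_real : forall c z, Cnorm (Cmul (c,0) z) = Rabs c * Cnorm z.
Proof. intros. rewrite Cnorm_mul. f_equal. unfold Cnorm; cxD. rewrite <- sqrt_Rsqr_abs. unfold Rsqr; f_equal; ring. Qed.

Lemma wdist : forall w w', Cnorm2 w < 1 -> Cnorm2 w' < 1 ->
  Cnorm (Csub w w') * (1 - Cnorm w) <= 2 * Cnorm (Csub (vw w) (vw w')).
Proof. intros w w' Hw Hw'.
  set (d := Csub w w').
  assert (Id : Csub d (Cmul (Cmul w w') (Cconj d)) = Cmul ((1 + Cnorm2 w) * (1 + Cnorm2 w') / 2, 0) (Csub (vw w) (vw w'))).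
  { unfold d, vw. destruct w as [a b], w' as [c e]. cxD. f_equal; field; split; nra. }
  pose proof (Cnorm_rev_triang d (Cmul (Cmul w w') (Cconj d))) as T.
  rewrite Id, Cnorm_real, !Cnorm_mul, Cnorm_conj in T.
  pose proof (Cnorm2_nonneg w); pose proof (Cnorm2_nonneg w').
  rewrite Rabs_right in T by (apply Rle_ge; apply Rmult_le_pos; [nra|lra]).
  pose proof (Cnorm_nonneg w); pose proof (Cnorm_nonneg w'); pose proof (Cnorm_nonneg d).
  pose proof (Cnorm_nonneg (Csub (vw w) (vw w'))).
  apply Cnorm_lt1 in Hw, Hw'.
  assert (Cnorm w * Cnorm w' * Cnorm d <= Cnorm w * Cnorm d).
  { rewrite (Rmult_comm (Cnorm w) (Cnorm w')), Rmult_assoc. rewrite <- (Rmult_1_l (Cnorm w * Cnorm d)) at 2.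
    apply Rmult_le_compat_r; [apply Rmult_le_pos|]; lra. }
  assert ((1 + Cnorm2 w) * (1 + Cnorm2 w') / 2 * Cnorm (Csub (vw w) (vw w')) <= 2 * Cnorm (Csub (vw w) (vw w'))).
  { apply Rmult_le_compat_r; auto. apply Cnorm_lt1 in Hw; apply Cnorm_lt1 in Hw'. nra. }
  lra. Qed.

Definition vsm (s m : Cx) : Cx := (fst m / (fst s - fst m), snd m / (fst s - fst m)).

Lemma g_sm : forall w, Dl w <> 0 -> fst (sOf w) - fst (mOf w) = 3 * (1 + Cnorm2 w) / Dl w.
Proof. intros [x y] H. cxD. field. auto. Qed.

Lemma vw_sm : forall w, Dl w <> 0 -> vw w = vsm (sOf w) (mOf w).
Proof. intros w H. unfold vsm. rewrite g_sm by auto. unfold vw. destruct w as [x y]. cxD.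
  f_equal; field; split; auto; nra. Qed.

Lemma Cnorm_eq0_sub : forall a b, Cnorm (Csub a b) = 0 -> a = b.
Proof. intros a b H. apply Cnorm_zero in H. destruct a, b; cxD. injection H; intros; f_equal; lra. Qed.

Lemma winj : forall w w', Cnorm2 w < 1 -> Cnorm2 w' < 1 -> Dl w <> 0 -> Dl w' <> 0 ->
  sOf w = sOf w' -> mOf w = mOf w' -> w = w'.
Proof. intros w w' Hw Hw' D D' Hs Hm.
  assert (vw w = vw w') by (rewrite !vw_sm, Hs, Hm by auto; auto).
  pose proof (wdist w w' Hw Hw'). rewrite H in H0.
  replace (Csub (vw w') (vw w')) with C0 in H0 by (destruct (vw w'); cxD; f_equal; ring).
  rewrite Cnorm_C0 in H0. pose proof (Cnorm_nonneg (Csub w w')).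
  assert (Cnorm w < 1) by (apply Cnorm_lt1; auto).
  apply Cnorm_eq0_sub. nra. Qed.

Lemma interval_conn : forall B : R -> Prop,
  (forall l, 0 <= l <= 1 -> exists d, d > 0 /\ forall u, 0 <= u <= 1 -> Rabs (u - l) < d -> (B u <-> B l)) ->
  B 0 -> B 1.
Proof. intros B HB H0.
  set (E := fun l => 0 <= l <= 1 /\ forall u, 0 <= u <= l -> B u).
  assert (Eb : bound E) by (exists 1; intros x [Hx _]; lra).
  assert (Ene : exists x, E x) by (exists 0; split; [lra|]; intros u Hu; replace u with 0 by lra; auto).
  destruct (completeness E Eb Ene) as [l [Hub Hlub]].
  assert (Hl0 : 0 <= l) by (apply Hub; destruct Ene; unfold E; split; [lra|]; intros u Hu; replace u with 0 by lra; auto).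
  assert (Hl1 : l <= 1) by (apply Hlub; intros x [Hx _]; lra).
  destruct (HB l (conj Hl0 Hl1)) as [d [Hd Hloc]].
  assert (Hex : exists x, E x /\ l - d < x).
  { apply NNPP; intro N. assert (is_upper_bound E (l - d)).
    { intros x Ex. destruct (Rle_lt_dec x (l - d)); auto. exfalso; apply N; exists x; split; auto; lra. }
    specialize (Hlub _ H); lra. }
  destruct Hex as [x [[Hx Ex] Hxl]].
  assert (Hxl' : x <= l) by (apply Hub; split; auto).
  assert (Bl : B l) by (apply (Hloc x); [lra| rewrite Rabs_left1 by lra; lra | apply Ex; lra]).
  assert (Hm : E (Rmin 1 (l + d/2))).
  { split; [unfold Rmin; destruct (Rle_dec 1 (l+d/2)); lra|].
    intros u Hu. destruct (Rle_lt_dec u x) as [Hux|Hux]; [apply Ex; lra|].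
    apply (Hloc u); auto. unfold Rmin in Hu; destruct (Rle_dec 1 (l+d/2)); split; lra.
    apply Rabs_def1; unfold Rmin in Hu; destruct (Rle_dec 1 (l+d/2)); lra. }
  specialize (Hub _ Hm). unfold Rmin in Hub; destruct (Rle_dec 1 (l + d/2)); [|lra].
  replace 1 with l by lra. auto. Qed.

Definition S0 (x : sphere) : Prop := outside_disk x /\ Dl (wof x) > 0.
Definition sc (l : R) (w : Cx) : Cx := (l * fst w, l * snd w).

Lemma sc_norm : forall l w, 0 <= l <= 1 -> Cnorm2 w < 1 -> Cnorm2 (sc l w) < 1.
Proof. intros l [a b] Hl H. unfold sc; cxD. assert (l*l <= 1) by nra. nra. Qed.

Lemma sc_Dl : forall l w, 0 <= l <= 1 -> Cnorm2 w < 1 -> Dl w > 0 -> Dl (sc l w) > 0.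
Proof. intros l [a b] Hl H D. unfold sc; cxD.
  replace (1 + (l*a*(l*a) + l*b*(l*b)) + 4*(l*a)) with (l * (1 + (a*a+b*b) + 4*a) + (1-l)*(1 - l*(a*a+b*b))) by ring.
  destruct (Req_dec l 1). subst; nra.
  assert (0 < (1-l)*(1 - l*(a*a+b*b))) by (apply Rmult_lt_0_compat; nra). nra. Qed.

Lemma sc_dist : forall l u w, Cnorm2 w < 1 -> Cnorm (Csub (sc l w) (sc u w)) <= Rabs (l - u).
Proof. intros l u w H.
  replace (Csub (sc l w) (sc u w)) with (Cmul (l - u, 0) w) by (destruct w; unfold sc; cxD; f_equal; ring).
  rewrite Cnorm_real. assert (Cnorm w < 1) by (apply Cnorm_lt1; auto).
  pose proof (Rabs_pos (l-u)). pose proof (Cnorm_nonneg w). nra. Qed.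

Lemma S0_path : forall A, rel_open S0 A -> rel_open S0 (fun x => ~ A x) ->
  forall z, S0 z -> (A None <-> A z).
Proof. intros A HA HnA z [Hz HD].
  set (w := wof z). pose proof (wof_lt1 z Hz) as Hw. fold w in Hw, HD.
  set (B := fun l => A (unrefl (sc l w))).
  assert (S0l : forall l, 0 <= l <= 1 -> S0 (unrefl (sc l w))).
  { intros l Hl. split; [apply outside_unrefl, sc_norm; auto|]. rewrite wof_unrefl. apply sc_Dl; auto. }
  assert (Ch : forall l u, chordal (unrefl (sc l w)) (unrefl (sc u w)) <= 2 * Rabs (l - u)).
  { intros. rewrite chordal_unrefl. eapply Rle_trans; [apply chordalC_le|]. pose proof (sc_dist l u w Hw). lra. }
  assert (Loc : forall l, 0 <= l <= 1 -> exists d, d > 0 /\ forall u, 0 <= u <= 1 -> Rabs (u - l) < d -> (B u <-> B l)).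
  { intros l Hl. destruct (classic (B l)) as [Bl|Bl].
    - destruct (HA _ (S0l l Hl) Bl) as [d [Hd Hd']]. exists (d/2). split; [lra|].
      intros u Hu Hul. split; auto. intros _. apply Hd'; auto. pose proof (Ch l u). rewrite Rabs_minus_sym in Hul. lra.
    - destruct (HnA _ (S0l l Hl) Bl) as [d [Hd Hd']]. exists (d/2). split; [lra|].
      intros u Hu Hul. split; [|tauto]. intros Bu. exfalso. apply (Hd' (unrefl (sc u w))); auto.
      pose proof (Ch l u). rewrite Rabs_minus_sym in Hul. lra. }
  assert (E0 : unrefl (sc 0 w) = None).
  { unfold unrefl. destruct (Req_EM_T (Cnorm2 (sc 0 w)) 0) as [e|e]; auto. exfalso; apply e. destruct w; unfold sc; cxD; ring. }
  assert (E1 : unrefl (sc 1 w) = z).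
  { replace (sc 1 w) with w by (destruct w; unfold sc; cxD; f_equal; ring). apply unrefl_wof; auto. }
  split.
  - intro H. pose proof (interval_conn B Loc) as I. unfold B in I. rewrite E0, E1 in I. auto.
  - intro H. apply NNPP; intro N.
    assert (Loc' : forall l, 0 <= l <= 1 -> exists d, d > 0 /\ forall u, 0 <= u <= 1 -> Rabs (u - l) < d -> (~ B u <-> ~ B l)).
    { intros l Hl. destruct (Loc l Hl) as [d [Hd Hd']]. exists d; split; auto. intros u Hu Hul. specialize (Hd' u Hu Hul). tauto. }
    pose proof (interval_conn (fun l => ~ B l) Loc') as I. unfold B in I. rewrite E0, E1 in I. exact (I N H). Qed.

Lemma S0_conn : connected S0.
Proof. intros A HA HnA x y Sx Sy Ax. apply (S0_path A HA HnA y Sy). apply (S0_path A HA HnA x Sx). auto. Qed.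

Lemma Dl_wof : forall z, Cnorm2 z <> 0 -> Dl (wof (Some z)) = (Cnorm2 z + 1 + 4 * fst z) / Cnorm2 z.
Proof. intros [a b] H. unfold wof. rewrite Cinv_conj_eq. cxD. field. auto. Qed.

Lemma gamma_f : forall z, gamma z -> Cnorm2 z + 1 + 4 * fst z = 0.
Proof. intros z [r [t [Hr [Ht Ez]]]]. subst z. cxD.
  pose proof (sin2_cos2 t). unfold Rsqr in H.
  assert (E : r * (r + / r + 4 * cos t) = r*r + 1 + 4*(r*cos t)) by (field; lra).
  rewrite Ht in E.
  replace (r * cos t * (r * cos t) + r * sin t * (r * sin t) + 1 + 4 * (r * cos t))
    with (r*r*(sin t * sin t + cos t * cos t) + 1 + 4*(r*cos t)) by ring.
  rewrite H. lra. Qed.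

Lemma f_gamma : forall z, Cnorm2 z > 1 -> Cnorm2 z + 1 + 4 * fst z = 0 -> gamma z.
Proof. intros [z1 z2] Hn Hf. cbv [Cnorm2 fst snd] in *.
  set (r := sqrt (z1*z1+z2*z2)).
  assert (Hr2 : r * r = z1*z1+z2*z2) by (apply sqrt_sqrt; lra).
  assert (Hr : r > 1) by (pose proof (sqrt_pos (z1*z1+z2*z2)); fold r in H; nra).
  set (a := z1 / r).
  assert (Ha : -1 <= a <= 1).
  { unfold a. assert (z1*z1 <= r*r) by nra. split.
    - apply (Rmult_le_reg_r r); [lra|]. unfold Rdiv; rewrite Rmult_assoc, Rinv_l by lra. nra.
    - apply (Rmult_le_reg_r r); [lra|]. unfold Rdiv; rewrite Rmult_assoc, Rinv_l by lra. nra. }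
  assert (Hs : r * sqrt (1 - a²) = Rabs z2).
  { rewrite <- (sqrt_square r) at 1 by lra. rewrite <- sqrt_mult_alt by nra.
    rewrite <- sqrt_Rsqr_abs. f_equal. unfold a, Rsqr. replace (r*r*(1 - z1/r*(z1/r))) with (r*r - z1*z1) by (field; lra). lra. }
  destruct (Rle_dec 0 z2) as [H2|H2].
  - exists r, (acos a). split; auto. rewrite cos_acos by auto. split.
    + unfold a. replace (r + / r + 4 * (z1 / r)) with ((r*r + 1 + 4*z1)/r) by (field; lra).
      replace (r*r+1+4*z1) with 0 by lra. unfold Rdiv; ring.
    + rewrite sin_acos by auto. rewrite Hs, Rabs_right by lra. unfold a. f_equal. field. lra.
  - exists r, (- acos a). split; auto. rewrite cos_neg, cos_acos by auto. split.
    + unfold a. replace (r + / r + 4 * (z1 / r)) with ((r*r + 1 + 4*z1)/r) by (field; lra).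
      replace (r*r+1+4*z1) with 0 by lra. unfold Rdiv; ring.
    + rewrite sin_neg, sin_acos by auto. replace (r * - sqrt (1 - a²)) with (- (r * sqrt (1 - a²))) by ring.
      rewrite Hs, Rabs_left by lra. unfold a. f_equal; [field; lra|ring]. Qed.

Lemma S0_X : forall x, S0 x -> Xset x.
Proof. intros [z|] [Ho HD]; [|exact I]. unfold Xset; unfold outside_disk in Ho. split; auto. intro G.
  apply Cnorm_gt1 in Ho. rewrite Dl_wof in HD by lra. rewrite (gamma_f z G) in HD. unfold Rdiv in HD; lra. Qed.

Lemma S0_2 : S0 (Some (Cof 2)).
Proof. split. simpl. apply Cnorm_gt1. cxD; lra. rewrite Dl_wof by (cxD; lra). cxD. apply Rdiv_lt_0_compat; lra. Qed.

Lemma Dl_lip : forall a b, Cnorm2 a < 1 -> Cnorm2 b < 1 -> Rabs (Dl a - Dl b) <= 8 * Cnorm (Csub a b).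
Proof. intros a b Ha Hb.
  pose proof (Cnorm_fst (Csub a b)) as H1; pose proof (Cnorm_snd (Csub a b)) as H2.
  set (h := Cnorm (Csub a b)) in *. destruct a as [a1 a2], b as [b1 b2]. cbv [Csub Cadd Copp fst snd] in H1, H2.
  cbv [Cnorm2 fst snd Dl] in *.
  replace (1 + (a1*a1+a2*a2) + 4*a1 - (1 + (b1*b1+b2*b2) + 4*b1)) with
    ((a1 + - b1) * (a1 + b1) + (a2 + - b2)*(a2+b2) + 4 * (a1 + - b1)) by ring.
  assert (-1 < a1 < 1) by (split; nra). assert (-1 < b1 < 1) by (split; nra).
  assert (-1 < a2 < 1) by (split; nra). assert (-1 < b2 < 1) by (split; nra).
  assert (Rabs (a1+b1) <= 2) by (apply Rabs_le; split; lra).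
  assert (Rabs (a2+b2) <= 2) by (apply Rabs_le; split; lra).
  eapply Rle_trans; [apply Rabs_triang|]. eapply Rle_trans; [apply Rplus_le_compat_r, Rabs_triang|].
  rewrite !Rabs_mult, (Rabs_right 4) by lra.
  pose proof (Rabs_pos (a1 + - b1)); pose proof (Rabs_pos (a2 + - b2)). nra. Qed.

Lemma X_out : forall x, Xset x -> outside_disk x.
Proof. intros [z|] H; simpl in *; tauto. Qed.

Lemma chordal_w : forall x y, outside_disk x -> outside_disk y -> chordal x y = chordalC (wof x) (wof y).
Proof. intros. rewrite <- (unrefl_wof x) at 1 by auto. rewrite <- (unrefl_wof y) at 1 by auto. apply chordal_unrefl. Qed.

Lemma wdist_chordal : forall x y, outside_disk x -> outside_disk y -> Cnorm (Csub (wof x) (wof y)) <= chordal x y.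
Proof. intros. rewrite chordal_w by auto. pose proof (wof_lt1 x H); pose proof (wof_lt1 y H0). apply chordalC_ge; lra. Qed.

Lemma Rabs_le_betw : forall x a, Rabs x <= a -> -a <= x <= a.
Proof. intros. pose proof (Rle_abs x); pose proof (Rle_abs (-x)); rewrite Rabs_Ropp in *; split; lra. Qed.

Lemma Uset_S0 : forall x, Uset x -> S0 x.
Proof. intros x [S [HX [Hc [H2 Hx]]]].
  assert (O1 : rel_open S S0); [|assert (O2 : rel_open S (fun x => ~ S0 x)); [|exact (Hc S0 O1 O2 _ _ H2 Hx S0_2)]].
  - intros x0 Sx0 [Ho HD]. exists (Dl (wof x0) / 8). split; [lra|].
    intros y Sy Hch. pose proof (X_out _ (HX y Sy)) as Hy. split; auto.
    pose proof (wdist_chordal x0 y Ho Hy). pose proof (Dl_lip _ _ (wof_lt1 _ Ho) (wof_lt1 _ Hy)).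
    apply Rabs_le_betw in H0. lra.
  - intros x0 Sx0 N. pose proof (X_out _ (HX x0 Sx0)) as Ho.
    assert (HD : Dl (wof x0) < 0).
    { destruct (Rlt_le_dec (Dl (wof x0)) 0) as [l|l]; auto. destruct l as [l|l]; [exfalso; apply N; split; auto|].
      exfalso. destruct x0 as [z|]; [|unfold wof in l; cxD; lra]. pose proof (HX _ Sx0) as [Hz G]. apply G.
      apply Cnorm_gt1 in Hz. apply f_gamma; auto. rewrite Dl_wof in l by lra.
      symmetry in l. unfold Rdiv in l. apply Rmult_integral in l. destruct l as [l|l]; auto. exfalso; apply (Rinv_neq_0_compat (Cnorm2 z)); lra. }
    exists (- Dl (wof x0) / 8). split; [lra|].
    intros y Sy Hch [Hy HDy].
    pose proof (wdist_chordal x0 y Ho Hy). pose proof (Dl_lip _ _ (wof_lt1 _ Ho) (wof_lt1 _ Hy)).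
    apply Rabs_le_betw in H0. lra. Qed.

Ltac cxE := cbv [Bwron Wpoly Bnum Bden Bnum' Bden' Cof Cadd Csub Copp Cmul Cconj Cnorm2 Defs.C1 C0 Cinv Dl sOf mOf Pw fst snd] in *.

Lemma div_cont : forall a b e, b > 0 -> e > 0 -> exists d, d > 0 /\
  forall a' b', Rabs (a' - a) < d -> Rabs (b' - b) < d -> Rabs (a'/b' - a/b) < e.
Proof. intros a b e Hb He.
  set (K := b + Rabs a). assert (HK : K > 0) by (unfold K; pose proof (Rabs_pos a); lra).
  exists (Rmin (b/2) (e*b*b/(4*K))). split.
  { apply Rmin_glb_lt; [lra|]. apply Rdiv_lt_0_compat; [|lra]. apply Rmult_lt_0_compat; [nra|lra]. }
  intros a' b' Ha Hb'.
  assert (d1 : Rabs (a' - a) < e*b*b/(4*K)) by (eapply Rlt_le_trans; [apply Ha|apply Rmin_r]).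
  assert (d2 : Rabs (b' - b) < e*b*b/(4*K)) by (eapply Rlt_le_trans; [apply Hb'|apply Rmin_r]).
  assert (d3 : Rabs (b' - b) < b/2) by (eapply Rlt_le_trans; [apply Hb'|apply Rmin_l]).
  apply Rabs_def2 in d3. assert (Hb2 : b' > b/2) by lra.
  replace (a'/b' - a/b) with (((a'-a)*b - a*(b'-b)) / (b*b')) by (field; lra).
  assert (Hn : Rabs ((a'-a)*b - a*(b'-b)) <= Rabs (a'-a) * b + Rabs a * Rabs (b'-b)).
  { unfold Rminus at 1. eapply Rle_trans; [apply Rabs_triang|]. rewrite Rabs_Ropp, !Rabs_mult, (Rabs_right b) by lra. lra. }
  assert (Hn2 : Rabs (a'-a) * b + Rabs a * Rabs (b'-b) <= e*b*b/(4*K) * K).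
  { revert d1 d2. generalize (e*b*b/(4*K)). intros X d1 d2. unfold K.
    pose proof (Rabs_pos a). pose proof (Rabs_pos (a'-a)); pose proof (Rabs_pos (b'-b)).
    assert (Rabs (a'-a) * b <= X * b) by (apply Rmult_le_compat_r; lra).
    assert (Rabs a * Rabs (b'-b) <= Rabs a * X) by (apply Rmult_le_compat_l; lra). nra. }
  replace (e*b*b/(4*K)*K) with (e*b*b/4) in Hn2 by (field; lra).
  unfold Rdiv. rewrite Rabs_mult, (Rabs_right (/ (b*b'))) by (apply Rle_ge, Rlt_le, Rinv_0_lt_compat; nra).
  apply (Rmult_lt_reg_r (b*b')); [nra|]. rewrite Rmult_assoc, Rinv_l by nra. rewrite Rmult_1_r.
  assert (0 < e*b*(b' - b/4)) by (apply Rmult_lt_0_compat; [nra|lra]).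
  assert (e*b*b/4 < e*(b*b')) by nra. lra. Qed.


Lemma vsm_cont : forall s m, fst s - fst m > 0 -> forall e, e > 0 -> exists h, h > 0 /\
  forall s' m', Cnorm (Csub s' s) < h -> Cnorm (Csub m' m) < h -> Cnorm (Csub (vsm s' m') (vsm s m)) < e.
Proof. intros s m Hg e He.
  destruct (div_cont (fst m) (fst s - fst m) (e/2) Hg ltac:(lra)) as [d1 [Hd1 D1]].
  destruct (div_cont (snd m) (fst s - fst m) (e/2) Hg ltac:(lra)) as [d2 [Hd2 D2]].
  exists (Rmin d1 d2 / 2). split; [assert (0 < Rmin d1 d2) by (apply Rmin_glb_lt; lra); lra|].
  intros s' m' Hs Hm. pose proof (Rmin_l d1 d2); pose proof (Rmin_r d1 d2).
  pose proof (Cnorm_fst (Csub s' s)); pose proof (Cnorm_fst (Csub m' m)); pose proof (Cnorm_snd (Csub m' m)).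
  destruct s as [s1 s2], m as [m1 m2], s' as [s1' s2'], m' as [m1' m2']. cbv [Csub Cadd Copp fst snd] in *.
  eapply Rle_lt_trans; [apply Cnorm_le_sum|]. unfold vsm. cbv [Csub Cadd Copp fst snd].
  assert (Hg' : Rabs ((s1' - m1') - (s1 - m1)) < Rmin d1 d2).
  { replace ((s1' - m1') - (s1 - m1)) with ((s1' + - s1) - (m1' + - m1)) by ring.
    eapply Rle_lt_trans; [apply Rabs_triang|]. rewrite Rabs_Ropp. lra. }
  assert (A1 : Rabs (m1'/(s1'-m1') - m1/(s1-m1)) < e/2) by (apply D1; unfold Rminus in *; lra).
  assert (A2 : Rabs (m2'/(s1'-m1') - m2/(s1-m1)) < e/2) by (apply D2; unfold Rminus in *; lra).
  unfold Rminus in *. lra. Qed.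

Lemma sm_cont : forall w, Cnorm2 w < 1 -> Dl w > 0 -> forall e, e > 0 -> exists h, h > 0 /\
  forall w', Cnorm2 w' < 1 -> Cnorm (Csub w' w) < h ->
  Cnorm (Csub (sOf w') (sOf w)) < e /\ Cnorm (Csub (mOf w') (mOf w)) < e.
Proof. intros w Hw HD e He.
  destruct (div_cont (3*(2*fst w + (1+Cnorm2 w))) (Dl w) (e/2) HD ltac:(lra)) as [d1 [Hd1 D1]].
  destruct (div_cont (6*snd w) (Dl w) (e/2) HD ltac:(lra)) as [d2 [Hd2 D2]].
  destruct (div_cont (6*fst w) (Dl w) (e/2) HD ltac:(lra)) as [d3 [Hd3 D3]].
  set (d := Rmin d1 (Rmin d2 d3)).
  assert (Hd : d > 0) by (unfold d; repeat apply Rmin_glb_lt; lra).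
  assert (d <= d1 /\ d <= d2 /\ d <= d3) by (unfold d; split; [apply Rmin_l|split; eapply Rle_trans; [apply Rmin_r|apply Rmin_l|apply Rmin_r|apply Rmin_r]]).
  exists (d/30). split; [lra|]. intros w' Hw' Hh.
  pose proof (Dl_lip w' w Hw' Hw) as L. apply Rabs_le_betw in L.
  pose proof (Cnorm_fst (Csub w' w)) as F1; pose proof (Cnorm_snd (Csub w' w)) as F2.
  pose proof (Cnorm_nonneg (Csub w' w)).
  set (h := Cnorm (Csub w' w)) in *. apply Rabs_le_betw in F1; apply Rabs_le_betw in F2.
  assert (EDl : Rabs (Dl w' - Dl w) < d) by (apply Rabs_def1; lra).
  destruct w as [x y], w' as [x' y']. cbv [Csub Cadd Copp fst snd] in F1, F2.
  assert (E1 : Rabs (3*(2*x' + (1+Cnorm2 (x',y'))) - 3*(2*x + (1+Cnorm2 (x,y)))) < d).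
  { replace (3*(2*x' + (1+Cnorm2 (x',y'))) - 3*(2*x + (1+Cnorm2 (x,y)))) with
       (3*(Dl (x',y') - Dl (x,y)) - 6*(x' + - x)) by (cxE; ring).
    apply Rabs_def1; lra. }
  assert (E2 : Rabs (6*y' - 6*y) < d) by (apply Rabs_def1; lra).
  assert (E3 : Rabs (6*x' - 6*x) < d) by (apply Rabs_def1; lra).
  split; eapply Rle_lt_trans; try apply Cnorm_le_sum; unfold sOf, mOf; cbv [Csub Cadd Copp fst snd].
  - destruct H as [H1 [H2 H3]].
    pose proof (D1 _ _ (Rlt_le_trans _ _ _ E1 H1) (Rlt_le_trans _ _ _ EDl H1)) as A1.
    pose proof (D2 _ _ (Rlt_le_trans _ _ _ E2 H2) (Rlt_le_trans _ _ _ EDl H2)) as A2.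
    unfold Rminus in *; simpl in *; lra.
  - destruct H as [H1 [H2 H3]].
    pose proof (D3 _ _ (Rlt_le_trans _ _ _ E3 H3) (Rlt_le_trans _ _ _ EDl H3)) as A3.
    pose proof (D2 _ _ (Rlt_le_trans _ _ _ E2 H2) (Rlt_le_trans _ _ _ EDl H2)) as A2.
    unfold Rminus in *; simpl in *; lra. Qed.

Lemma roots_bound : forall p q p' q', Cnorm p > 1 -> Cnorm q < 1 -> Cnorm p' > 1 -> Cnorm q' < 1 ->
  Cnorm (Csub p' p) * (1 - Cnorm q) <= Cnorm (Csub (Cadd p' q') (Cadd p q)) * Cnorm p' + Cnorm (Csub (Cmul p' q') (Cmul p q)) /\
  Cnorm (Csub q' q) * (Cnorm p - 1) <= Cnorm (Csub (Cadd p' q') (Cadd p q)) + Cnorm (Csub (Cmul p' q') (Cmul p q)).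
Proof. intros p q p' q' Hp Hq Hp' Hq'.
  set (ds := Csub (Cadd p' q') (Cadd p q)). set (dm := Csub (Cmul p' q') (Cmul p q)).
  assert (I1 : Cmul (Csub p' p) (Csub p' q) = Csub (Cmul ds p') dm)
    by (unfold ds, dm; destruct p, q, p', q'; cxE; f_equal; ring).
  assert (I2 : Cmul (Csub q' q) (Csub q' p) = Csub (Cmul ds q') dm)
    by (unfold ds, dm; destruct p, q, p', q'; cxE; f_equal; ring).
  pose proof (Cnorm_nonneg (Csub p' p)); pose proof (Cnorm_nonneg (Csub q' q)); pose proof (Cnorm_nonneg ds).
  pose proof (Cnorm_nonneg dm); pose proof (Cnorm_nonneg q); pose proof (Cnorm_nonneg p').
  split.
  - pose proof (f_equal Cnorm I1) as J. rewrite Cnorm_mul in J.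
    pose proof (Cnorm_sub_triang (Cmul ds p') dm) as T. rewrite Cnorm_mul in T.
    pose proof (Cnorm_rev_triang p' q) as R.
    assert (Cnorm (Csub p' p) * (1 - Cnorm q) <= Cnorm (Csub p' p) * Cnorm (Csub p' q))
      by (apply Rmult_le_compat_l; lra). lra.
  - pose proof (f_equal Cnorm I2) as J. rewrite Cnorm_mul in J.
    pose proof (Cnorm_sub_triang (Cmul ds q') dm) as T. rewrite Cnorm_mul in T.
    pose proof (Cnorm_rev_triang p q') as R. rewrite Cnorm_sub_sym in R.
    assert (Cnorm (Csub q' q) * (Cnorm p - 1) <= Cnorm (Csub q' q) * Cnorm (Csub q' p))
      by (apply Rmult_le_compat_l; lra).
    assert (Cnorm ds * Cnorm q' <= Cnorm ds) by (pose proof (Cnorm_nonneg q'); nra). lra. Qed.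

Lemma roots_eq : forall p q p' q', Cnorm p > 1 -> Cnorm q < 1 -> Cnorm p' > 1 -> Cnorm q' < 1 ->
  Cadd p q = Cadd p' q' -> Cmul p q = Cmul p' q' -> p = p' /\ q = q'.
Proof. intros p q p' q' Hp Hq Hp' Hq' Hs Hm.
  destruct (roots_bound p q p' q' Hp Hq Hp' Hq') as [B1 B2].
  rewrite Hs, Hm in B1, B2.
  assert (Z : forall a, Cnorm (Csub a a) = 0) by (intros [a b]; replace (Csub (a,b) (a,b)) with C0 by (cxE; f_equal; ring); apply Cnorm_C0).
  rewrite !Z in B1, B2. pose proof (Cnorm_nonneg (Csub p' p)); pose proof (Cnorm_nonneg (Csub q' q)).
  split; symmetry; apply Cnorm_eq0_sub; nra. Qed.

Lemma pdist_p : forall p q p' q', Cnorm (Csub p' p) <= pdist p q p' q'.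
Proof. intros. unfold pdist. rewrite Cnorm_sub_sym. apply Rmax_l. Qed.
Lemma pdist_q : forall p q p' q', Cnorm (Csub q' q) <= pdist p q p' q'.
Proof. intros. unfold pdist. rewrite Cnorm_sub_sym. apply Rmax_r. Qed.

Lemma sm_lip : forall p q p' q', Cnorm q' < 1 ->
  Cnorm (Csub (Cadd p' q') (Cadd p q)) <= 2 * pdist p q p' q' /\
  Cnorm (Csub (Cmul p' q') (Cmul p q)) <= (Cnorm p + 1) * pdist p q p' q'.
Proof. intros p q p' q' Hq'.
  pose proof (pdist_p p q p' q'); pose proof (pdist_q p q p' q'). split.
  - replace (Csub (Cadd p' q') (Cadd p q)) with (Cadd (Csub p' p) (Csub q' q)) by (destruct p, q, p', q'; cxE; f_equal; ring).
    pose proof (Cnorm_triang (Csub p' p) (Csub q' q)). lra.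
  - replace (Csub (Cmul p' q') (Cmul p q)) with (Cadd (Cmul (Csub p' p) q') (Cmul p (Csub q' q))) by (destruct p, q, p', q'; cxE; f_equal; ring).
    pose proof (Cnorm_triang (Cmul (Csub p' p) q') (Cmul p (Csub q' q))). rewrite !Cnorm_mul in H1.
    pose proof (Cnorm_nonneg (Csub p' p)); pose proof (Cnorm_nonneg p); pose proof (Cnorm_nonneg q').
    assert (Cnorm (Csub p' p) * Cnorm q' <= pdist p q p' q') by nra.
    assert (Cnorm p * Cnorm (Csub q' q) <= Cnorm p * pdist p q p' q') by (apply Rmult_le_compat_l; auto). nra. Qed.

Lemma inB_facts : forall p q c, inB p q -> is_Phi p q c ->
  Cnorm p > 1 /\ Cnorm q < 1 /\ outside_disk c /\ Cnorm2 (wof c) < 1 /\ Dl (wof c) > 0 /\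
  Cadd p q = sOf (wof c) /\ Cmul p q = mOf (wof c).
Proof. intros p q c [Hp [Hq _]] HP.
  pose proof Hp as Hp2; pose proof Hq as Hq2. apply Cnorm_gt1 in Hp2; apply Cnorm_lt1 in Hq2.
  destruct (K1 p q c Hp2 Hq2 HP) as [Hw [HD [Hs Hm]]].
  pose proof (K2a p q (wof c) Hp2 Hq2 Hw HD Hs Hm).
  destruct HP as [Ho _]. tauto. Qed.

Lemma Phi_unique : forall p q c c', inB p q -> is_Phi p q c -> is_Phi p q c' -> c = c'.
Proof. intros p q c c' HB H1 H2.
  destruct (inB_facts _ _ _ HB H1) as [_ [_ [O1 [W1 [D1 [S1 M1]]]]]].
  destruct (inB_facts _ _ _ HB H2) as [_ [_ [O2 [W2 [D2 [S2 M2]]]]]].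
  assert (wof c = wof c') by (apply winj; try lra; congruence).
  rewrite <- (unrefl_wof c O1), <- (unrefl_wof c' O2). congruence. Qed.

Theorem mainTheorem14 :
  forall Phi : Cx -> Cx -> sphere,
    (forall p q, inB p q -> is_Phi p q (Phi p q)) ->
    (forall p q, inB p q -> Uset (Phi p q)) /\
    (forall p q p' q', inB p q -> inB p' q' -> Phi p q = Phi p' q' ->
        p = p' /\ q = q') /\
    (forall w, Uset w -> exists p q, inB p q /\ Phi p q = w) /\
    (forall p q, inB p q -> forall eps, eps > 0 -> exists d, d > 0 /\
        forall p' q', inB p' q' -> pdist p q p' q' < d ->
          chordal (Phi p q) (Phi p' q') < eps) /\
    (forall p q, inB p q -> forall eps, eps > 0 -> exists d, d > 0 /\
        forall p' q', inB p' q' -> chordal (Phi p q) (Phi p' q') < d ->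
          pdist p q p' q' < eps).
Proof.
  intros Phi HPhi.
  assert (F : forall p q, inB p q -> Cnorm p > 1 /\ Cnorm q < 1 /\ outside_disk (Phi p q) /\
     Cnorm2 (wof (Phi p q)) < 1 /\ Dl (wof (Phi p q)) > 0 /\
     Cadd p q = sOf (wof (Phi p q)) /\ Cmul p q = mOf (wof (Phi p q)))
    by (intros; apply inB_facts; auto).
  split; [|split; [|split; [|split]]].
  -
    intros p q HB. destruct (F p q HB) as [_ [_ [O [_ [D _]]]]].
    exists S0. split; [apply S0_X|]. split; [apply S0_conn|]. split; [apply S0_2|]. split; auto.
  -
    intros p q p' q' HB HB' E.
    destruct (F p q HB) as [Hp [Hq [_ [_ [_ [S M]]]]]].
    destruct (F p' q' HB') as [Hp' [Hq' [_ [_ [_ [S' M']]]]]].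
    rewrite E in S, M. apply roots_eq; auto; congruence.
  -
    intros x HU. destruct (Uset_S0 x HU) as [Ho HD].
    pose proof (wof_lt1 x Ho) as Hw.
    destruct (K3 (wof x) Hw HD) as [p [q [Hp [Hq [S M]]]]].
    pose proof (K3phi p q (wof x) Hw ltac:(lra) S M) as HP. rewrite unrefl_wof in HP by auto.
    assert (HB : inB p q) by (split; [apply Cnorm_gt1; auto|split; [apply Cnorm_lt1; auto|exists x; auto]]).
    exists p, q. split; auto. apply (Phi_unique p q); auto.
  -
    intros p q HB eps Heps.
    destruct (F p q HB) as [Hp [Hq [O [Hw [HD [S M]]]]]].
    set (w := wof (Phi p q)) in *.
    assert (Hg : fst (Cadd p q) - fst (Cmul p q) > 0).
    { rewrite S, M, g_sm by lra. apply Rdiv_lt_0_compat; auto. pose proof (Cnorm2_nonneg w); lra. }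
    assert (Hnw : Cnorm w < 1) by (apply Cnorm_lt1; auto).
    destruct (vsm_cont _ _ Hg (eps * (1 - Cnorm w) / 4) ltac:(apply Rdiv_lt_0_compat; [apply Rmult_lt_0_compat|]; lra))
      as [h [Hh Hv]].
    pose proof (Cnorm_nonneg p).
    exists (h / (2 * (Cnorm p + 2))). split; [apply Rdiv_lt_0_compat; lra|].
    intros p' q' HB' Hd.
    destruct (F p' q' HB') as [Hp' [Hq' [O' [Hw' [HD' [S' M']]]]]].
    set (w' := wof (Phi p' q')) in *.
    destruct (sm_lip p q p' q' Hq') as [L1 L2].
    assert (Hpd : 0 <= pdist p q p' q') by (pose proof (pdist_p p q p' q'); pose proof (Cnorm_nonneg (Csub p' p)); lra).
    assert (X : h / (2 * (Cnorm p + 2)) * (2 * (Cnorm p + 2)) = h) by (field; lra).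
    assert (A1 : Cnorm (Csub (Cadd p' q') (Cadd p q)) < h).
    { assert (2 * pdist p q p' q' * (Cnorm p + 2) < h) by nra. nra. }
    assert (A2 : Cnorm (Csub (Cmul p' q') (Cmul p q)) < h).
    { assert ((Cnorm p + 1) * pdist p q p' q' < h) by nra. lra. }
    pose proof (Hv _ _ A1 A2) as V.
    rewrite S, M, S', M', <- !vw_sm in V by lra.
    pose proof (wdist w w' Hw Hw') as Wd. rewrite Cnorm_sub_sym in V.
    rewrite chordal_w by auto. fold w w'.
    eapply Rle_lt_trans; [apply chordalC_le|].
    assert (Cnorm (Csub w w') * (1 - Cnorm w) < eps / 2 * (1 - Cnorm w)) by lra.
    assert (Cnorm (Csub w w') < eps / 2) by (apply (Rmult_lt_reg_r (1 - Cnorm w)); lra).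
    lra.
  -
    intros p q HB eps Heps.
    destruct (F p q HB) as [Hp [Hq [O [Hw [HD [S M]]]]]].
    set (w := wof (Phi p q)) in *.
    set (K := Cnorm (Cadd p q)). pose proof (Cnorm_nonneg (Cadd p q)) as HK. fold K in HK.
    set (eta := Rmin 1 (Rmin (eps*(1 - Cnorm q)/(2*(K+3))) (eps*(Cnorm p - 1)/4))).
    assert (He : eta > 0) by (unfold eta; repeat apply Rmin_glb_lt; try lra; apply Rdiv_lt_0_compat; try apply Rmult_lt_0_compat; lra).
    assert (He1 : eta <= 1) by apply Rmin_l.
    assert (He2 : eta <= eps*(1 - Cnorm q)/(2*(K+3))) by (eapply Rle_trans; [apply Rmin_r|apply Rmin_l]).
    assert (He3 : eta <= eps*(Cnorm p - 1)/4) by (eapply Rle_trans; [apply Rmin_r|apply Rmin_r]).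
    destruct (sm_cont w Hw HD eta He) as [h [Hh Hc]].
    exists h. split; auto. intros p' q' HB' Hch.
    destruct (F p' q' HB') as [Hp' [Hq' [O' [Hw' [HD' [S' M']]]]]].
    set (w' := wof (Phi p' q')) in *.
    pose proof (wdist_chordal _ _ O O') as Wc. fold w w' in Wc. rewrite Cnorm_sub_sym in Wc.
    destruct (Hc w' Hw' ltac:(lra)) as [Cs Cm].
    rewrite <- S, <- S', <- M, <- M' in *.
    destruct (roots_bound p q p' q' Hp Hq Hp' Hq') as [B1 B2].
    set (ds := Cnorm (Csub (Cadd p' q') (Cadd p q))) in *.
    set (dm := Cnorm (Csub (Cmul p' q') (Cmul p q))) in *.
    assert (Hpp : Cnorm p' <= K + 2).
    { replace p' with (Csub (Cadd (Csub (Cadd p' q') (Cadd p q)) (Cadd p q)) q') at 1 by (destruct p, q, p', q'; cbv [Csub Cadd Copp fst snd]; f_equal; ring).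
      pose proof (Cnorm_sub_triang (Cadd (Csub (Cadd p' q') (Cadd p q)) (Cadd p q)) q').
      pose proof (Cnorm_triang (Csub (Cadd p' q') (Cadd p q)) (Cadd p q)). fold ds K in H0. lra. }
    pose proof (Cnorm_nonneg (Csub p' p)); pose proof (Cnorm_nonneg (Csub q' q)); pose proof (Cnorm_nonneg p').
    assert (ds * Cnorm p' <= eta * (K+2)) by (apply Rmult_le_compat; try apply Cnorm_nonneg; lra).
    assert (eta * (K+3) <= eps*(1 - Cnorm q)/2).
    { apply (Rmult_le_reg_r (/(K+3))); [apply Rinv_0_lt_compat; lra|].
      replace (eta * (K+3) * /(K+3)) with eta by (field; lra).
      replace (eps * (1 - Cnorm q) / 2 * / (K + 3)) with (eps * (1 - Cnorm q) / (2 * (K + 3))) by (field; lra). auto. }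
    assert (P1 : Cnorm (Csub p' p) < eps).
    { assert (Cnorm (Csub p' p) * (1 - Cnorm q) < eps * (1 - Cnorm q)) by nra.
      apply (Rmult_lt_reg_r (1 - Cnorm q)); lra. }
    assert (P2 : Cnorm (Csub q' q) < eps).
    { assert (Cnorm (Csub q' q) * (Cnorm p - 1) < eps * (Cnorm p - 1)) by nra.
      apply (Rmult_lt_reg_r (Cnorm p - 1)); lra. }
    unfold pdist. rewrite (Cnorm_sub_sym p), (Cnorm_sub_sym q). apply Rmax_lub_lt; auto.
Qed.
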